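(* Let $N\in(\mathbb{N}^* )^m$, $I\subseteq\{1,\dots,m\}$, and let $A\subseteq F_I(\Gamma^m)$ be a non-closed monohedral largely continuous precell mod $N$. Then for every integer $n\geq1$ there exist $N'\in(\mathbb{N}^* )^m$ and a partition $(A_i)_{1\leq i\leq n}$ of $A$ into largely continuous precells mod $N'$ such that $\partial A_i=\partial A$ for $1\leq i\leq n$.
   Context: $\mathcal{Z}$ is a $\mathbb{Z}$-group (linearly ordered abelian group with smallest positive element $1$, $|\mathcal{Z}/n\mathcal{Z}|=n$ for all $n\geq1$), $\mathcal{Q}$ its divisible hull, $\Gamma=\mathcal{Z}\cup\{+\infty\}$, $\Omega=\mathcal{Q}\cup\{+\infty\}$, $+\infty$ maximal and absorbing for $+$. Topology on $\Omega$ generated by open intervals and $]a,+\infty]$; product topology on $\Omega^m$; $\overline A$ closure; $A$ closed iff $A=\overline A$; frontier $\partial A$ = closure of $\overline A\setminus A$. $F_K(\Gamma^m)$: points whose non-$+\infty$ coordinates are exactly those in $K$; $F_K(A)=\overline A\cap F_K(\Gamma^m)$, a face when non-empty; $A$ is monohedral if its faces are linearly ordered by $B\leq C$ iff $B\subseteq\overline C$. Socle $\widehat a=(a_1,\dots,a_{m-1})$, $\widehat A$, $\widehat N$. Congruence: $a\equiv b\,[n]$ iff $a-b\in n\mathcal{Z}$, and $a\equiv+\infty\,[n]$ always. For $Y\subseteq F_K(\Gamma^k)$, $g:Y\to\Omega$ is affine if constantly $+\infty$ or $g(y)=\alpha_0+\sum_{i\in K}\alpha_iy_i$ ($\alpha_0\in\mathcal{Q}$,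 $\alpha_i\in\mathbb{Q}$); largely continuous if it extends continuously to $\overline Y$. Largely continuous precells mod $N$: $\Gamma^0$ for $m=0$; for $m\geq1$, $A\subseteq F_I(\Gamma^m)$ such that $\widehat A$ is a largely continuous precell mod $\widehat N$ and for some non-negative largely continuous affine $\mu,\nu:\widehat A\to\Omega$ and integer $0\leq\rho<N_m$, $A=\{a\in F_I(\Gamma^m):\widehat a\in\widehat A,\ \mu(\widehat a)\leq a_m\leq\nu(\widehat a),\ a_m\equiv\rho\,[N_m]\}$. *)

(* Defs.v *)
From mathcomp Require Import all_boot all_order all_algebra.
Set Implicit Arguments. Unset Strict Implicit. Unset Printing Implicit Defensive.
Import GRing.Theory.
Local Open Scope ring_scope.

(* The divisible hull Q of a Z-group Z is modelled as a Q-vector space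
   (divisible torsion-free abelian group) [Q : lmodType rat], together with
   a total order compatible with addition, the subgroup Z (predicate [zs]),
   its smallest positive element [one], the axiom |Z/nZ| = n, and the fact
   that every element of Q has a positive multiple in Z. *)
Record zgroup (Q : lmodType rat) := ZGroup {
  zle : Q -> Q -> bool;
  zle_refl : forall x, zle x x;
  zle_anti : forall x y, zle x y -> zle y x -> x = y;
  zle_trans : forall x y z, zle x y -> zle y z -> zle x z;
  zle_total : forall x y, zle x y || zle y x;
  zle_add : forall x y z, zle x y -> zle (x + z) (y + z);
  zs : Q -> Prop;
  zs0 : zs 0;
  zsB : forall x y, zs x -> zs y -> zs (x - y);
  one : Q;
  zs_one : zs one;
  one_pos : zle 0 one /\ one != 0;
  one_min : forall z, zs z -> zle 0 z -> z != 0 -> zle one z;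
  (* |Z / nZ| = n : there are n representatives of pairwise distinct classes
     covering Z *)
  zs_index : forall n : nat, (0 < n)%N ->
    exists f : 'I_n -> Q, (forall i, zs (f i)) /\
      forall z, zs z -> exists! i, exists w, zs w /\ z - f i = w *+ n;
  hull : forall q : Q, exists n : nat, (0 < n)%N /\ zs (q *+ n)
}.

Section Defs.
Variables (Q : lmodType rat) (G : zgroup Q).

(* Omega = Q u {+oo}, with +oo represented by None. *)
Definition Omega := option Q.

Definition ole (x y : Omega) : bool :=
  match x, y with
  | _, None => true
  | None, Some _ => false
  | Some p, Some q => zle G p q
  end.
Definition olt (x y : Omega) : bool := ole x y && (x != y).

Definition fin (x : Omega) : Q := odflt 0 x.

Definition inGam (x : Omega) : Prop :=
  match x with Some q => zs G q | None => True end.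
Definition inGamma (m : nat) (a : 'I_m -> Omega) : Prop := forall i, inGam (a i).

Definition inF (m : nat) (K : {set 'I_m}) (a : 'I_m -> Omega) : Prop :=
  inGamma a /\ forall i, i \in K <-> a i <> None.

(* Basic open sets of Omega: (lo, Some hi) is ]lo, hi[ and (lo, None) is
   ]lo, +oo]  (lo, hi in Omega). *)
Definition inB (U : Omega * option Omega) (y : Omega) : bool :=
  match U with
  | (lo, Some hi) => olt lo y && olt y hi
  | (lo, None) => olt lo y
  end.

Definition inBox (m : nat) (U : 'I_m -> Omega * option Omega) (y : 'I_m -> Omega)
  : Prop := forall i, inB (U i) (y i).

Definition oclosure (m : nat) (A : ('I_m -> Omega) -> Prop) (x : 'I_m -> Omega)
  : Prop := forall U, inBox U x -> exists y, A y /\ inBox U y.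

Definition oclosed (m : nat) (A : ('I_m -> Omega) -> Prop) : Prop :=
  forall x, oclosure A x <-> A x.

Definition ofrontier (m : nat) (A : ('I_m -> Omega) -> Prop) :=
  oclosure (fun x => oclosure A x /\ ~ A x).

Definition face (m : nat) (K : {set 'I_m}) (A : ('I_m -> Omega) -> Prop) :=
  fun a => oclosure A a /\ inF K a.

Definition monohedral (m : nat) (A : ('I_m -> Omega) -> Prop) : Prop :=
  forall K L : {set 'I_m},
    (exists a, face K A a) -> (exists b, face L A b) ->
    (forall a, face K A a -> oclosure (face L A) a) \/
    (forall a, face L A a -> oclosure (face K A) a).

Definition affine_on (k : nat) (Y : ('I_k -> Omega) -> Prop)
    (g : ('I_k -> Omega) -> Omega) : Prop :=
  exists K : {set 'I_k}, (forall y, Y y -> inF K y) /\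
    ((forall y, Y y -> g y = None) \/
     exists (a0 : Q) (al : 'I_k -> rat),
       forall y, Y y -> g y = Some (a0 + \sum_(i in K) al i *: fin (y i))).

Definition continuous_on (k : nat) (S : ('I_k -> Omega) -> Prop)
    (h : ('I_k -> Omega) -> Omega) : Prop :=
  forall x, S x -> forall V, inB V (h x) ->
    exists U, inBox U x /\ forall z, S z -> inBox U z -> inB V (h z).

Definition largely_continuous (k : nat) (Y : ('I_k -> Omega) -> Prop)
    (g : ('I_k -> Omega) -> Omega) : Prop :=
  exists h, (forall y, Y y -> h y = g y) /\ continuous_on (oclosure Y) h.

Definition nonneg_on (k : nat) (Y : ('I_k -> Omega) -> Prop)
    (g : ('I_k -> Omega) -> Omega) : Prop :=
  forall y, Y y -> ole (Some 0) (g y).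

Definition congr (a : Omega) (rho n : nat) : Prop :=
  match a with
  | None => True
  | Some q => exists w, zs G w /\ q - one G *+ rho = w *+ n
  end.

Definition soc (m : nat) (T : Type) (a : 'I_m.+1 -> T) : 'I_m -> T :=
  fun i => a (widen_ord (leqnSn m) i).

Definition soc_set (m : nat) (A : ('I_m.+1 -> Omega) -> Prop) :
    ('I_m -> Omega) -> Prop :=
  fun b => exists a, A a /\ forall i, soc a i = b i.

Fixpoint precell (m : nat) :
    ('I_m -> nat) -> (('I_m -> Omega) -> Prop) -> Prop :=
  match m return ('I_m -> nat) -> (('I_m -> Omega) -> Prop) -> Prop with
  | 0 => fun _ A => forall a, A a <-> inGamma a
  | m'.+1 => fun N A =>
      exists I : {set 'I_m'.+1},
        (forall a, A a -> inF I a) /\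
        precell (soc N) (soc_set A) /\
        exists (mu nu : ('I_m' -> Omega) -> Omega) (rho : nat),
          affine_on (soc_set A) mu /\ largely_continuous (soc_set A) mu /\
          nonneg_on (soc_set A) mu /\
          affine_on (soc_set A) nu /\ largely_continuous (soc_set A) nu /\
          nonneg_on (soc_set A) nu /\
          (rho < N ord_max)%N /\
          forall a, A a <->
            (inF I a /\ soc_set A (soc a) /\
             ole (mu (soc a)) (a ord_max) /\ ole (a ord_max) (nu (soc a)) /\
             congr (a ord_max) rho (N ord_max))
  end.

End Defs.

(* Submission.v *)
Require Import Defs.
From mathcomp Require Import all_boot all_order all_algebra.
From Stdlib Require Import ClassicalEpsilon Classical FunctionalExtensionality PropExtensionality.
From mathcomp Require Import zify.

Set Implicit Arguments. Unset Strict Implicit. Unset Printing Implicit Defensive.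
Import GRing.Theory.
Local Open Scope ring_scope.

Section Ord.
Context {Q : lmodType rat} {G : zgroup Q}.
Local Notation le := (zle G).
Definition zlt (x y : Q) := le x y && (x != y).
Local Notation lt := zlt.
Local Notation zs := (zs G).
Local Notation one := (Defs.one G).

Lemma le_refl x : le x x. Proof. exact: zle_refl. Qed.
Lemma le_trans y x z : le x y -> le y z -> le x z. Proof. exact: zle_trans. Qed.
Arguments le_trans y [x z].
Lemma le_anti x y : le x y -> le y x -> x = y. Proof. exact: zle_anti. Qed.
Lemma le_addr z x y : le x y -> le (x + z) (y + z). Proof. exact: zle_add. Qed.
Lemma le_addl z x y : le x y -> le (z + x) (z + y).
Proof. by rewrite ![z + _]addrC; apply: le_addr. Qed.
Lemma le_addrE z x y : le (x + z) (y + z) = le x y.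
Proof.
apply/idP/idP; last exact: le_addr.
by move=> /(le_addr (-z)); rewrite !addrK.
Qed.
Lemma le_subE x y : le x y = le 0 (y - x).
Proof. by rewrite -(le_addrE (-x)) subrr. Qed.
Lemma le_add2 a b c d : le a b -> le c d -> le (a + c) (b + d).
Proof. move=> h1 h2; apply: (le_trans (b + c)); [exact: le_addr|exact: le_addl]. Qed.
Lemma le_total x y : le x y || le y x. Proof. exact: zle_total. Qed.
Lemma ltNge x y : lt x y = ~~ le y x.
Proof.
rewrite /zlt; case: (boolP (le x y)) => h /=.
  apply/idP/idP=> [ne|/negP ny]; last by apply/eqP=> e; subst; apply: ny; apply: le_refl.
  by apply/negP=> h2; move: ne; rewrite (le_anti h h2) eqxx.
by have := le_total x y; rewrite (negPf h) /= => ->.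
Qed.
Lemma leNgt x y : le x y = ~~ lt y x. Proof. by rewrite ltNge negbK. Qed.
Lemma ltW x y : lt x y -> le x y. Proof. by case/andP. Qed.
Lemma lt_neq x y : lt x y -> x != y. Proof. by case/andP. Qed.
Lemma lt_irr x : ~~ lt x x. Proof. by rewrite /zlt eqxx andbF. Qed.
Lemma le_lt_trans y x z : le x y -> lt y z -> lt x z.
Proof. move=> h1; rewrite !ltNge => /negP h2; apply/negP=> h3; apply: h2; exact: le_trans h3 h1. Qed.
Arguments le_lt_trans y [x z].
Lemma lt_le_trans y x z : lt x y -> le y z -> lt x z.
Proof. rewrite !ltNge => /negP h2 h1; apply/negP=> h3; apply: h2; exact: le_trans h1 h3. Qed.
Arguments lt_le_trans y [x z].
Lemma lt_trans y x z : lt x y -> lt y z -> lt x z.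
Proof. move=> h1 h2; exact: lt_le_trans h1 (ltW h2). Qed.
Arguments lt_trans y [x z].
Lemma lt_addrE z x y : lt (x + z) (y + z) = lt x y.
Proof. by rewrite !ltNge le_addrE. Qed.
Lemma lt_addr z x y : lt x y -> lt (x + z) (y + z). Proof. by rewrite lt_addrE. Qed.
Lemma lt_addl z x y : lt x y -> lt (z + x) (z + y).
Proof. by rewrite ![z + _]addrC; apply: lt_addr. Qed.
Lemma lt_subE x y : lt x y = lt 0 (y - x).
Proof. by rewrite -(lt_addrE (-x)) subrr. Qed.
Lemma lt_le_add a b c d : lt a b -> le c d -> lt (a + c) (b + d).
Proof. move=> h1 h2; apply: (lt_le_trans (b + c)); [exact: lt_addr|exact: le_addl]. Qed.
Lemma le_lt_add a b c d : le a b -> lt c d -> lt (a + c) (b + d).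
Proof. move=> h1 h2; apply: (le_lt_trans (b + c)); [exact: le_addr|exact: lt_addl]. Qed.
Lemma le_opp x y : le x y -> le (- y) (- x).
Proof. by rewrite le_subE [le (-y) _]le_subE opprK addrC. Qed.
Lemma lt_opp x y : lt x y -> lt (- y) (- x).
Proof. by rewrite lt_subE [lt (-y) _]lt_subE opprK addrC. Qed.
Lemma le_oppE x y : le (-x) (-y) = le y x.
Proof. by apply/idP/idP => h; [rewrite -(opprK x) -(opprK y)|]; apply: le_opp. Qed.
Lemma lt_oppE x y : lt (-x) (-y) = lt y x.
Proof. by rewrite !ltNge le_oppE. Qed.
Lemma le0_muln x n : le 0 x -> le 0 (x *+ n).
Proof.
move=> h; elim: n => [|n ih]; first by rewrite mulr0n le_refl.
by rewrite mulrS -(addr0 0); apply: le_add2.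
Qed.
Lemma le_muln x y n : le x y -> le (x *+ n) (y *+ n).
Proof. by rewrite le_subE [le (x *+ n) _]le_subE -mulrnBl; apply: le0_muln. Qed.
Lemma lt0_muln x n : lt 0 x -> (0 < n)%N -> lt 0 (x *+ n).
Proof.
move=> h; case: n => // n _; rewrite mulrS -(addr0 0).
by apply: lt_le_add => //; apply: le0_muln; apply: ltW.
Qed.
Lemma lt_muln x y n : lt x y -> (0 < n)%N -> lt (x *+ n) (y *+ n).
Proof. by rewrite lt_subE [lt (x *+ n) _]lt_subE -mulrnBl; apply: lt0_muln. Qed.
Lemma le_mulnE x y n : (0 < n)%N -> le (x *+ n) (y *+ n) = le x y.
Proof.
move=> n0; apply/idP/idP; last exact: le_muln.
by rewrite !leNgt; apply: contra => h; apply: lt_muln.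
Qed.
Lemma lt_mulnE x y n : (0 < n)%N -> lt (x *+ n) (y *+ n) = lt x y.
Proof. by move=> n0; rewrite !ltNge le_mulnE. Qed.
Lemma muln_inj (x y : Q) n : (0 < n)%N -> x *+ n = y *+ n -> x = y.
Proof.
move=> n0 e; apply: le_anti; rewrite -(le_mulnE _ _ n0) e le_refl //.
Qed.
Lemma lt_nmul x a b : lt 0 x -> (a < b)%N -> lt (x *+ a) (x *+ b).
Proof.
move=> x0 ab; rewrite -(subnKC (ltnW ab)) mulrnDr -{1}(addr0 (x *+ a)).
by apply: lt_addl; apply: lt0_muln; rewrite // subn_gt0.
Qed.
Lemma le_nmul x a b : le 0 x -> (a <= b)%N -> le (x *+ a) (x *+ b).
Proof.
move=> x0 ab; rewrite -(subnKC ab) mulrnDr -{1}(addr0 (x *+ a)).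
by apply: le_addl; apply: le0_muln.
Qed.

Lemma one_gt0 : lt 0 one.
Proof. by case: (Defs.one_pos G) => h1 h2; rewrite /zlt h1 eq_sym h2. Qed.

Lemma zsN x : zs x -> zs (- x).
Proof. by move=> h; rewrite -sub0r; apply: zsB => //; apply: zs0. Qed.
Lemma zsD x y : zs x -> zs y -> zs (x + y).
Proof. by move=> hx hy; rewrite -(opprK y); apply: zsB => //; apply: zsN. Qed.
Lemma zsB' x y : zs x -> zs y -> zs (x - y). Proof. exact: zsB. Qed.
Lemma zs_muln x n : zs x -> zs (x *+ n).
Proof. by move=> h; elim: n => [|n ih]; [rewrite mulr0n; apply: zs0|rewrite mulrS; apply: zsD]. Qed.
Lemma zs_one' : zs one. Proof. exact: zs_one. Qed.
Lemma zs_onen n : zs (one *+ n). Proof. apply: zs_muln; exact: zs_one. Qed.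
Lemma zs_mulz x (k : int) : zs x -> zs (x *~ k).
Proof. by move=> h; case: k => n /=; [apply: zs_muln|apply: zsN; apply: zs_muln]. Qed.

Lemma zs_ge1 z : zs z -> lt 0 z -> le one z.
Proof. by move=> hz /andP[h1 h2]; apply: one_min; rewrite // eq_sym. Qed.

Lemma zs_near a b : zs a -> zs b -> lt (a - b) one -> lt (b - a) one -> a = b.
Proof.
move=> ha hb h1 h2; apply/eqP; apply/negPn/negP => ne.
have hd : zs (a - b) by apply: zsB.
case/orP: (le_total 0 (a - b)) => h.
  have : lt 0 (a - b) by rewrite /zlt h eq_sym subr_eq0.
  move/(zs_ge1 hd) => h3; by move: (le_lt_trans _ h3 h1); rewrite (negPf (lt_irr _)).
have : lt 0 (b - a).
  rewrite -opprB -oppr0 lt_oppE /zlt h subr_eq0 //.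
move/(zs_ge1 (zsB hb ha)) => h3; by move: (le_lt_trans _ h3 h2); rewrite (negPf (lt_irr _)).
Qed.

Definition zdiff (a b : Q) (n : nat) := exists w, zs w /\ a - b = w *+ n.

Lemma zdiff_refl a n : zdiff a a n.
Proof. by exists 0; rewrite subrr mul0rn; split => //; apply: zs0. Qed.
Lemma zdiff_sym a b n : zdiff a b n -> zdiff b a n.
Proof. by case=> w [hw e]; exists (- w); rewrite mulNrn -e opprB; split => //; apply: zsN. Qed.
Lemma zdiff_trans b a c n : zdiff a b n -> zdiff b c n -> zdiff a c n.
Proof.
case=> w [hw e] [w' [hw' e']]; exists (w + w'); split; first exact: zsD.
by rewrite mulrnDl -e -e' addrA subrK.
Qed.
Arguments zdiff_trans b [a c n].
Lemma zdiff_dvd a b n k : zdiff a b (n * k) -> zdiff a b n.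
Proof.
case=> w [hw e]; exists (w *+ k); split; first exact: zs_muln.
by rewrite e mulnC mulrnA.
Qed.
Lemma zdiff_add a b c n : zdiff a b n -> zdiff (a + c) (b + c) n.
Proof. by case=> w [hw e]; exists w; rewrite opprD addrACA subrr addr0. Qed.
Lemma zdiff_muln a b n : zs a -> zs b -> zdiff (a *+ n) (b *+ n) n.
Proof. by move=> ha hb; exists (a - b); rewrite mulrnBl; split => //; apply: zsB. Qed.

Lemma std_distinct n i i' : (i < n)%N -> (i' < n)%N ->
  zdiff (one *+ i) (one *+ i') n -> i = i'.
Proof.
wlog le_ii : i i' / (i' <= i)%N.
  move=> hw hi hi' hd; case: (leqP i' i) => h; first exact: hw.
  by apply/esym/hw => //; [apply: ltnW|apply: zdiff_sym].
move=> hi hi' [w [hw e]].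
rewrite -mulrnBr // in e.
case: (boolP (w == 0)) => [/eqP w0|wn0].
  move: e; rewrite w0 mul0rn => e.
  apply/eqP; rewrite eqn_leq le_ii andbT -subn_eq0; apply/eqP.
  case: (i - i')%N e => // k e; move: (lt0_muln (n:=k.+1) one_gt0 isT).
  by rewrite e /zlt eqxx andbF.
case/orP: (le_total 0 w) => h.
  have w1 : le one w by apply: one_min.
  have : lt (one *+ (i - i')) (one *+ n).
    apply: lt_nmul; first exact: one_gt0.
    by apply: leq_ltn_trans (leq_subr _ _) hi.
  rewrite e ltNge; move/negP; case; by apply: le_muln.
have : lt (w *+ n) 0.
  rewrite -(mul0rn _ n); apply: lt_muln; first by rewrite /zlt h wn0.
  exact: leq_ltn_trans hi.
rewrite -e ltNge => /negP; case; apply: le0_muln; apply: ltW; exact: one_gt0.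
Qed.

Lemma std_rep n z : (0 < n)%N -> zs z ->
  exists i, (i < n)%N /\ zdiff z (one *+ i) n.
Proof.
move=> n0 hz; have [f [hf hu]] := zs_index G n0.
have cls : forall q, zs q -> {i : 'I_n | exists w, zs w /\ q - f i = w *+ n}.
  move=> q hq; apply: constructive_indefinite_description.
  by have [i [h _]] := hu q hq; exists i.
pose g (i : 'I_n) : 'I_n := sval (cls _ (zs_onen i)).
have ginj : injective g.
  move=> i i'; rewrite /g; case: (cls _ _) => k hk; case: (cls _ _) => k' hk' /= ek.
  subst k'; apply/val_inj/(std_distinct (ltn_ord i) (ltn_ord i')).
  apply: (zdiff_trans (f k)); [exact: hk|exact: zdiff_sym].
have [gi gK Kg] := injF_bij ginj.
have [k hk] := cls z hz.
exists (gi k); split; first exact: ltn_ord.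
apply: (zdiff_trans (f k)); first exact: hk.
have := svalP (cls _ (zs_onen (gi k))); rewrite -/(g _) Kg => h.
exact: zdiff_sym.
Qed.

Lemma floorQ q : exists w, zs w /\ le w q /\ lt q (w + one).
Proof.
have [n [n0 hn]] := hull G q.
have [i [hi [w [hw e]]]] := std_rep n0 hn.
have e2 : (q - w) *+ n = one *+ i by rewrite mulrnBl; apply/eqP; rewrite subr_eq addrC -subr_eq e.
exists w; split => //; split.
  rewrite le_subE -(le_mulnE _ _ n0) mul0rn e2; apply: le0_muln; apply: ltW; exact: one_gt0.
rewrite -(lt_addrE (- w)) addrAC subrr add0r -(lt_mulnE _ _ n0) e2.
by apply: lt_nmul => //; exact: one_gt0.
Qed.

Lemma addr_shuffle (x y z w : Q) : x + (y + z - w) - y = x - w + z.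
Proof. by rewrite -addrA addrAC (addrC y z) addrK addrA addrAC. Qed.

Lemma ceil_class q r M : (r < M)%N ->
  exists z, zs z /\ lt q z /\ le z (q + one *+ M) /\ zdiff z (one *+ r) M.
Proof.
move=> rM; have M0 : (0 < M)%N by apply: leq_ltn_trans rM.
have [w [hw [h1 h2]]] := floorQ q.
set z0 := w + one.
have hz0 : zs z0 by apply: zsD => //; exact: zs_one.
have [s [sM hs]] := std_rep M0 hz0.
pose t := if (s <= r)%N then (r - s)%N else (r + M - s)%N.
have tM : (t < M)%N by rewrite /t; case: ifP => sr; lia.
exists (z0 + one *+ t); split; first by apply: zsD => //; apply: zs_onen.
split.
  rewrite -(addr0 q); apply: lt_le_add => //; apply: le0_muln; apply: ltW; exact: one_gt0.
split.
  have -> : one *+ M = one + one *+ M.-1 by rewrite -mulrS prednK.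
  rewrite addrA; apply: le_add2; first by apply: le_addr.
  by apply: le_nmul; [apply: ltW; exact: one_gt0|lia].
case: hs => v [hv ev].
rewrite /t; case: ifP => sr.
  exists v; split => //; rewrite -ev.
  have -> : one *+ r = one *+ s + one *+ (r - s) by rewrite -mulrnDr subnKC.
  by rewrite opprD addrACA subrr addr0.
exists (v + one); split; first by apply: zsD => //; exact: zs_one.
rewrite mulrnDl -ev.
have -> : one *+ (r + M - s) = one *+ r + one *+ M - one *+ s.
  rewrite -mulrnDr -mulrnBr //; lia.
exact: addr_shuffle.
Qed.
End Ord.

Set Implicit Arguments. Unset Strict Implicit. Unset Printing Implicit Defensive.
Import GRing.Theory.
Local Open Scope ring_scope.

Definition ext T m (U : 'I_m -> T) (v : T) (i : 'I_m.+1) : T :=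
  match (insub (val i) : option 'I_m) with Some j => U j | None => v end.
Lemma ext_w T m (U : 'I_m -> T) v j : ext U v (widen_ord (leqnSn m) j) = U j.
Proof. by rewrite /ext /= valK. Qed.
Lemma ext_max T m (U : 'I_m -> T) v : ext U v ord_max = v.
Proof. by rewrite /ext insubF //= ltnn. Qed.
Lemma ordS_case m (i : 'I_m.+1) : (exists j, i = widen_ord (leqnSn m) j) \/ i = ord_max.
Proof.
case: (ltnP i m) => h; first by left; exists (Ordinal h); apply: val_inj.
by right; apply: val_inj => /=; have := ltn_ord i; lia.
Qed.
Lemma soc_ext T m (U : 'I_m -> T) v : soc (ext U v) = U.
Proof. by apply: functional_extensionality => j; rewrite /soc ext_w. Qed.
Lemma ext_soc T m (a : 'I_m.+1 -> T) : ext (soc a) (a ord_max) = a.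
Proof.
apply: functional_extensionality => i; case: (ordS_case i) => [[j ->]|->].
  by rewrite ext_w.
by rewrite ext_max.
Qed.

Section Top.
Context {Q : lmodType rat} {G : zgroup Q}.
Local Notation le := (zle G).
Local Notation lt := (@zlt _ G).
Local Notation zs := (zs G).
Local Notation one := (Defs.one G).
Local Notation ole := (ole G).
Local Notation olt := (olt G).
Local Notation inB := (inB G).
Local Notation cl := (oclosure G).

Lemma olt_def x y : olt x y = ~~ ole y x.
Proof.
rewrite /olt; case: x => [p|]; case: y => [q|] //=.
by rewrite -ltNge.
Qed.
Lemma oleNgt x y : ole x y = ~~ olt y x. Proof. by rewrite olt_def negbK. Qed.
Lemma ole_refl x : ole x x. Proof. by case: x => //= p; apply: le_refl. Qed.
Lemma ole_trans y x z : ole x y -> ole y z -> ole x z.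
Proof. case: x => [p|]; case: y => [q|]; case: z => [r|] //=; exact: le_trans. Qed.
Lemma ole_total x y : ole x y || ole y x.
Proof. case: x => [p|]; case: y => [q|] //=; exact: le_total. Qed.
Lemma olt_le_trans y x z : olt x y -> ole y z -> olt x z.
Proof. rewrite !olt_def => /negP h1 h2; apply/negP => h3; apply: h1; exact: ole_trans h2 h3. Qed.
Lemma ole_lt_trans y x z : ole x y -> olt y z -> olt x z.
Proof. rewrite !olt_def => h1 /negP h2; apply/negP => h3; apply: h2; exact: ole_trans h3 h1. Qed.
Lemma oltW x y : olt x y -> ole x y. Proof. by case/andP. Qed.
Lemma olt_SS p q : olt (Some p) (Some q) = lt p q.
Proof. by rewrite olt_def /= ltNge. Qed.
Lemma olt_N x : olt x None = (x != None).
Proof. by case: x. Qed.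
Lemma olt_Nx x : olt None x = false.
Proof. by case: x. Qed.

Definition omax (x y : Omega Q) := if ole x y then y else x.
Definition omin (x y : Omega Q) := if ole x y then x else y.
Lemma olt_max x y z : olt (omax x y) z = olt x z && olt y z.
Proof.
rewrite /omax; case: ifP => h.
  apply/idP/idP => [h2|/andP[]//]; rewrite h2 andbT; exact: ole_lt_trans h h2.
apply/idP/idP => [h2|/andP[]//]; rewrite h2 /=.
have h' : ole y x by move: (ole_total x y); rewrite h.
exact: ole_lt_trans h' h2.
Qed.
Lemma olt_min x y z : olt z (omin x y) = olt z x && olt z y.
Proof.
rewrite /omin; case: ifP => h.
  apply/idP/idP => [h2|/andP[]//]; rewrite h2 /=; exact: olt_le_trans h2 h.
apply/idP/idP => [h2|/andP[]//]; rewrite h2 andbT.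
have h' : ole y x by move: (ole_total x y); rewrite h.
exact: olt_le_trans h2 h'.
Qed.

Definition hmin (a b : option (Omega Q)) :=
  match a, b with
  | None, _ => b
  | _, None => a
  | Some x, Some y => Some (omin x y)
  end.
Definition bmeet (U V : Omega Q * option (Omega Q)) :=
  (omax U.1 V.1, hmin U.2 V.2).
Lemma inB_meet U V y : inB (bmeet U V) y = inB U y && inB V y.
Proof.
case: U => [l1 [h1|]]; case: V => [l2 [h2|]] /=; rewrite olt_max ?olt_min;
  by rewrite -!andbA; do ?bool_congr.
Qed.

Definition boxmeet m (U V : 'I_m -> Omega Q * option (Omega Q)) i := bmeet (U i) (V i).
Lemma inBox_meet m (U V : 'I_m -> _) y :
  inBox G (boxmeet U V) y <-> inBox G U y /\ inBox G V y.
Proof.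
split; first by move=> h; split=> i; have := h i; rewrite /boxmeet inB_meet => /andP[].
by case=> h1 h2 i; rewrite /boxmeet inB_meet h1 h2.
Qed.

Definition stdB (x : Omega Q) : Omega Q * option (Omega Q) :=
  match x with
  | Some q => (Some (q - one), Some (Some (q + one)))
  | None => (Some 0, None)
  end.
Lemma stdB_in x : inB (stdB x) x.
Proof.
case: x => [q|] //=; rewrite !olt_SS; apply/andP; split.
  by rewrite lt_subE opprB addrC subrK one_gt0.
by rewrite lt_subE addrAC subrr add0r one_gt0.
Qed.
Definition stdBox m (x : 'I_m -> Omega Q) i := stdB (x i).
Lemma stdBox_in m (x : 'I_m -> Omega Q) : inBox G (stdBox x) x.
Proof. move=> i; exact: stdB_in. Qed.

Lemma stdB_pin q z : zs q -> inB (stdB (Some q)) z -> inGam G z -> z = Some q.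
Proof.
case: z => [p|] /=; last by [].

rewrite !olt_SS => hq /andP[h1 h2] hp; congr Some.
  apply: zs_near hp hq _ _.
  by rewrite -(lt_addrE q) subrK addrC.
by move: h1; rewrite lt_subE [zlt (q - p) _]lt_subE !opprB addrCA.
Qed.

Lemma sub_cl m (A : ('I_m -> Omega Q) -> Prop) x : A x -> cl A x.
Proof. by move=> h U hU; exists x. Qed.
Lemma cl_mono m (A B : ('I_m -> Omega Q) -> Prop) :
  (forall x, A x -> B x) -> forall x, cl A x -> cl B x.
Proof. move=> h x hx U hU; have [y [hy hU']] := hx U hU; exists y; split => //; exact: h. Qed.
Lemma cl_idem m (A : ('I_m -> Omega Q) -> Prop) x : cl (cl A) x -> cl A x.
Proof. move=> h U hU; have [y [hy hUy]] := h U hU; exact: hy U hUy. Qed.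

Lemma cl_gamma m (I : {set 'I_m}) (A : ('I_m -> Omega Q) -> Prop) x :
  (forall a, A a -> inF G I a) -> cl A x ->
  inGamma G x /\ (forall i, x i <> None -> i \in I).
Proof.
move=> hA hx; split.
  move=> i; case e: (x i) => [q|] //=.
  have [w [hw [h1 h2]]] := floorQ (G:=G) q.
  case: (boolP (q == w)) => [/eqP -> //|ne].
  pose U j : Omega Q * option (Omega Q) := if j == i then (Some w, Some (Some (w + one))) else stdB (x j).
  have hU : inBox G U x.
    move=> j; rewrite /U; case: eqP => [->|_]; last exact: stdB_in.
    by rewrite e /= !olt_SS h2 andbT /zlt h1 eq_sym.
  have [y [hy hUy]] := hx U hU.
  have := hUy i; rewrite /U eqxx /=.
  case/hA: hy => hg _; move: (hg i); case: (y i) => [p|] //=; rewrite !olt_SS.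
  move=> hp /andP[l1 l2].
  have : lt 0 (p - w) by rewrite -lt_subE.
  move/(zs_ge1 (zsB hp hw)); rewrite le_subE => h3.
  move: l2; rewrite lt_subE => l2.
  have : lt 0 ((w + one - p) + (p - w - one)).
    by rewrite -(addr0 0); apply: lt_le_add.
  have e3 : p - w - one = -(w + one - p) by rewrite opprB opprD addrA.
  by rewrite e3 subrr /zlt eqxx andbF.
move=> i ni; apply/negPn/negP => ni'.
case e: (x i) ni => [q|] // _.
have [y [hy hUy]] := hx (stdBox x) (stdBox_in x).
have := hUy i; rewrite /stdBox e.
case/hA: hy => _ /(_ i) [h1 h2].
case: (y i) h1 h2 => [p|] //= h1 h2.
by move=> _; move: (h2 (fun e => ltac:(discriminate))); rewrite (negPf ni').
Qed.

Definition patt m (x : 'I_m -> Omega Q) : {set 'I_m} := [set i | x i != None].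
Lemma cl_inF m (I : {set 'I_m}) (A : ('I_m -> Omega Q) -> Prop) x :
  (forall a, A a -> inF G I a) -> cl A x -> inF G (patt x) x /\ patt x \subset I.
Proof.
move=> hA hx; have [h1 h2] := cl_gamma hA hx; split.
  split => // i; rewrite inE; split; [by move/eqP|by move/eqP].
by apply/subsetP => i; rewrite inE => /eqP; apply: h2.
Qed.

Lemma cl_discrete m (I : {set 'I_m}) (B : ('I_m -> Omega Q) -> Prop) x :
  (forall a, B a -> inF G I a) -> inF G I x -> cl B x -> B x.
Proof.
move=> hB [hg hI] hx.
have [y [hy hU]] := hx _ (stdBox_in x).
suff -> : x = y by [].
apply: functional_extensionality => i.
have [hgy hIy] := hB _ hy.
case e: (x i) => [q|].
  have hq : zs q by move: (hg i); rewrite e.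
  apply/esym; apply: stdB_pin => //; first by rewrite -e; apply: hU.
case e2: (y i) => [p|] //.
have : i \in I by apply/hIy; rewrite e2.
by move/hI; rewrite e.
Qed.

Lemma cl_soc m (A : ('I_m.+1 -> Omega Q) -> Prop) x :
  cl A x -> cl (soc_set A) (soc x).
Proof.
move=> hx U hU.
have hU' : inBox G (ext U (stdB (x ord_max))) x.
  move=> i; case: (ordS_case i) => [[j ->]|->]; first by rewrite ext_w; apply: hU.
  by rewrite ext_max; apply: stdB_in.
have [y [hy hUy]] := hx _ hU'.
exists (soc y); split; first by exists y.
by move=> j; have := hUy (widen_ord (leqnSn m) j); rewrite ext_w.
Qed.

End Top.

Set Implicit Arguments. Unset Strict Implicit. Unset Printing Implicit Defensive.
Import GRing.Theory.
Local Open Scope ring_scope.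

Section Pre.
Variables (Q : lmodType rat) (G : zgroup Q).
Local Notation le := (zle G).
Local Notation lt := (@zlt _ G).
Local Notation zs := (zs G).
Local Notation one := (Defs.one G).
Local Notation ole := (ole G).
Local Notation olt := (olt G).
Local Notation inB := (inB G).
Local Notation cl := (oclosure G).
Local Notation zdiff := (@zdiff _ G).

Lemma congrE (q : Q) r n : congr G (Some q) r n <-> zdiff q (one *+ r) n.
Proof. by []. Qed.

Lemma precell_class m (N : 'I_m -> nat) A : precell G N A ->
  forall j a b p q, A a -> A b -> a j = Some p -> b j = Some q -> zdiff p q (N j).
Proof.
elim: m N A => [|m ih] N A; first by move=> _ [].
case=> I [hI [hsoc [mu [nu [rho [_ [_ [_ [_ [_ [_ [hrho hiff]]]]]]]]]]]].
move=> j a b p q ha hb; case: (ordS_case j) => [[j' ->]|->] ea eb.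
  have sa : soc_set A (soc a) by exists a.
  have sb : soc_set A (soc b) by exists b.
  exact: (ih _ _ hsoc j' _ _ p q sa sb).
have [_ [_ [_ [_ ca]]]] := (proj1 (hiff a) ha).
have [_ [_ [_ [_ cb]]]] := (proj1 (hiff b) hb).
move: ca cb; rewrite ea eb /= => ca cb.
apply: (@zdiff_trans _ G (one *+ rho)) => //; exact: zdiff_sym.
Qed.

Definition restr m (A : ('I_m -> Omega Q) -> Prop) (j : 'I_m) c M :=
  fun a => A a /\ congr G (a j) c M.
Definition upd m (N : 'I_m -> nat) (j : 'I_m) M := fun i => if i == j then M else N i.

Lemma affine_mono k (Y Y' : ('I_k -> Omega Q) -> Prop) g :
  (forall y, Y' y -> Y y) -> affine_on G Y g -> affine_on G Y' g.
Proof.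
move=> s [K [hK hh]]; exists K; split; first by move=> y /s; apply: hK.
case: hh => [h|[a0 [al h]]]; first by left => y /s; apply: h.
by right; exists a0, al => y /s; apply: h.
Qed.
Lemma lc_mono k (Y Y' : ('I_k -> Omega Q) -> Prop) g :
  (forall y, Y' y -> Y y) -> largely_continuous G Y g -> largely_continuous G Y' g.
Proof.
move=> s [h [e c]]; exists h; split; first by move=> y /s; apply: e.
move=> x hx V hV; have [U [hU hz]] := c x (cl_mono s hx) V hV.
exists U; split => // z hz' hUz; exact: hz z (cl_mono s hz') hUz.
Qed.
Lemma nonneg_mono k (Y Y' : ('I_k -> Omega Q) -> Prop) g :
  (forall y, Y' y -> Y y) -> nonneg_on G Y g -> nonneg_on G Y' g.
Proof. by move=> s h y /s; apply: h. Qed.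

Lemma pset_ext T (P P' : T -> Prop) : (forall x, P x <-> P' x) -> P = P'.
Proof. move=> h; apply: functional_extensionality => x; apply: propositional_extensionality; exact: h. Qed.

Lemma widen_lt m (i : 'I_m.+1) : (i < m)%N -> exists i', i = widen_ord (leqnSn m) i'.
Proof. move=> h; exists (Ordinal h); exact: val_inj. Qed.

Lemma max_neq_w m (j' : 'I_m) : (ord_max == widen_ord (leqnSn m) j') = false.
Proof. apply/negbTE/eqP => e; have := congr1 val e => /= h; move: (ltn_ord j'); rewrite -h ltnn; done. Qed.

Lemma Ref m (N : 'I_m -> nat) A (j : 'I_m) c M :
  precell G N A -> (N j %| M)%N -> (c < M)%N ->
  (forall a, A a -> exists a', A a' /\ (forall i : 'I_m, (i < j)%N -> a' i = a i) /\
      congr G (a' j) c M) ->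
  precell G (upd N j M) (restr A j c M).
Proof.
elim: m N A j => [|m ih] N A j; first by case: j.
case=> I [hI [hsoc [mu [nu [rho [amu [lmu [nmu [anu [lnu [nnu [hrho hiff]]]]]]]]]]]].
case: (ordS_case j) => [[j' ->]|->] dvd cM hext.
  set w := widen_ord (leqnSn m).
  have eS : soc_set (restr A (w j') c M) = restr (soc_set A) j' c M.
    apply: pset_ext => b; split.
      case=> a [[ha ca] eb]; split; first by exists a.
      by rewrite -eb.
    case=> [[a [ha eb]] cb]; exists a; split => //; split => //.
    by have := eb j'; rewrite /soc => ->.
  have eN : soc (upd N (w j') M) = upd (soc N) j' M.
    apply: functional_extensionality => i; rewrite /soc /upd.
    have -> : (w i == w j') = (i == j').
      apply/eqP/eqP => [e|->//]; apply: val_inj; exact: (congr1 val e).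
    by [].
  have IH : precell G (upd (soc N) j' M) (restr (soc_set A) j' c M).
    apply: ih; [exact: hsoc|exact: dvd|exact: cM|].
    move=> b [a [ha eb]]; have [a' [ha' [hag ca']]] := hext a ha.
    exists (soc a'); split; first by exists a'.
    split; last by [].
    by move=> i hi; rewrite -eb /soc; apply: hag.
  exists I; split; first by move=> a [ha _]; apply: hI.
  rewrite eS eN; split => //.
  have sub : forall b, restr (soc_set A) j' c M b -> soc_set A b by move=> b [].
  exists mu, nu, rho.
  split; first exact: affine_mono sub amu.
  split; first exact: lc_mono sub lmu.
  split; first exact: nonneg_mono sub nmu.
  split; first exact: affine_mono sub anu.
  split; first exact: lc_mono sub lnu.
  split; first exact: nonneg_mono sub nnu.
  split; first by rewrite /upd /w max_neq_w.
  move=> a; split.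
    case=> ha ca; have [h1 [h2 [h3 [h4 h5]]]] := (proj1 (hiff a) ha).
    split => //; split; [split => //; exact: h2|].
    by rewrite /upd /w max_neq_w.
  case=> h1 [[h2 h2'] h3]; split.
    by apply/hiff; split => //; split => //; move: h3; rewrite /upd /w max_neq_w.
  exact: h2'.
have eS : soc_set (restr A ord_max c M) = soc_set A.
  apply: pset_ext => b; split; first by case=> a [[ha _] eb]; exists a.
  case=> a [ha eb]; have [a' [ha' [hag ca']]] := hext a ha.
  exists a'; split => //; move=> i; rewrite -eb /soc; apply: hag.
  by rewrite /=; exact: ltn_ord.
have eN : soc (upd N ord_max M) = soc N.
  apply: functional_extensionality => i; rewrite /soc /upd.
  by case: eqP => // e; have := congr1 val e => /= h; move: (ltn_ord i); rewrite h ltnn.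
exists I; split; first by move=> a [ha _]; apply: hI.
rewrite eS eN; split => //.
exists mu, nu, c; do 6! (split => //).
split; first by rewrite /upd eqxx.
move=> a; split.
  case=> ha ca; have [h1 [h2 [h3 [h4 h5]]]] := (proj1 (hiff a) ha).
  by do 4! (split => //); rewrite /upd eqxx.
case=> h1 [h2 [h3 [h4 h5]]]; move: h5; rewrite /upd eqxx => h5.
split => //; apply/hiff; do 4! (split => //).
case: h2 => a'' [ha'' eb].
have [a3 [ha3 [hag ca3]]] := hext a'' ha''.
have [_ [_ [_ [_ c3]]]] := (proj1 (hiff a3) ha3).
case e: (a ord_max) h5 => [p|] //= h5.
have : ord_max \in I by apply/(proj2 h1 ord_max); rewrite e.
move/(proj2 (hI a3 ha3)); case e3: (a3 ord_max) c3 ca3 => [p3|] // c3 ca3 _.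
move: c3 ca3; rewrite /= => c3 ca3.
case/dvdnP: dvd => k ek; rewrite ek mulnC in h5 ca3.
apply: (@zdiff_trans _ G p3) => //.
apply: (@zdiff_trans _ G (one *+ c)); [exact: (zdiff_dvd h5)|exact: zdiff_sym (zdiff_dvd ca3)].
Qed.

End Pre.

Set Implicit Arguments. Unset Strict Implicit. Unset Printing Implicit Defensive.
Import GRing.Theory.
Local Open Scope ring_scope.

Lemma rat_den (s : seq rat) : exists d : nat, (0 < d)%N /\
  forall x, x \in s -> exists z : int, x * d%:R = z%:~R.
Proof.
elim: s => [|x s [d [d0 hd]]]; first by exists 1%N.
have [dd edd] := denqP x.
exists (d * dd.+1)%N; split; first by rewrite muln_gt0 d0.
move=> y; rewrite inE => /orP[/eqP ->|ys].
  exists (numq x * d%:Z); rewrite natrM mulrC -mulrA (mulrC _ x).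
  have -> : x * dd.+1%:R = (numq x)%:~R by rewrite numqE edd.
  by rewrite mulrC intrM.
have [z ez] := hd y ys; exists (z * dd.+1%:Z).
by rewrite natrM mulrA ez intrM.
Qed.

Section LC.
Context {Q : lmodType rat} {G : zgroup Q}.
Local Notation le := (zle G).
Local Notation lt := (@zlt _ G).
Local Notation zs := (zs G).
Local Notation one := (Defs.one G).
Local Notation ole := (ole G).
Local Notation olt := (olt G).
Local Notation inB := (inB G).
Local Notation cl := (oclosure G).
Local Notation stdBox := (@stdBox _ G).
Local Notation stdB := (@stdB _ G).

Lemma zs_lin k (K : {set 'I_k}) (al : 'I_k -> rat) (dl : 'I_k -> Q) (d : nat) :
  (forall i, zs (dl i)) -> (forall i, exists z : int, al i * d%:R = z%:~R) ->
  zs ((\sum_(i in K) al i *: dl i) *+ d).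
Proof.
move=> hz hal; rewrite -scaler_nat scaler_sumr.
apply: (big_ind zs); [exact: zs0|exact: zsD|] => i _.
have [z ez] := hal i.
by rewrite scalerA mulrC ez scaler_int; apply: zs_mulz.
Qed.

Lemma lt_sub a b c d : lt a b -> lt c d -> lt (a - d) (b - c).
Proof. move=> h1 h2; apply: lt_le_add => //; apply: ltW; exact: lt_opp. Qed.

Lemma loc_const k (Y : ('I_k -> Omega Q) -> Prop) g x (e : Q) :
  affine_on G Y g -> largely_continuous G Y g -> cl Y x ->
  exists U, inBox G U x /\ forall z w, Y z -> Y w -> inBox G U z -> inBox G U w ->
    g z = g w \/ (olt (Some e) (g z) /\ olt (Some e) (g w)).
Proof.
move=> [K [hK hf]] [h [eh ch]] hx.
case e1: (h x) => [q|].
  case: hf => [hN|[a0 [al hf]]].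
    exists (stdBox x); split; first exact: stdBox_in.
    by move=> z w hz hw _ _; left; rewrite !hN.
  have [d [d0 hd]] := rat_den [seq al i | i <- enum 'I_k].
  have hal : forall i, exists z : int, al i * d%:R = z%:~R.
    by move=> i; apply: hd; apply/mapP; exists i; rewrite ?mem_enum.
  pose n := (2 * d)%N.
  have n0 : (0 < n)%N by rewrite /n muln_gt0.
  pose r := (n%:R^-1 : rat) *: one.
  have rn : r *+ n = one.
    rewrite -scaler_nat /r scalerA mulfV ?scale1r //.
    by rewrite Num.Theory.pnatr_eq0 -lt0n.
  have r0 : lt 0 r.
    rewrite ltNge; apply/negP => hr.
    have : le (r *+ n) (0 *+ n) by apply: le_muln.
    by rewrite rn mul0rn leNgt one_gt0.
  have r2 : (r + r) *+ d = one by rewrite -mulr2n -mulrnA.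
  pose V := (Some (q - r), Some (Some (q + r))) : Omega Q * option (Omega Q).
  have hV : inB V (h x).
    rewrite e1 /V /= !olt_SS; apply/andP; split.
      by rewrite lt_subE opprB addrC subrK.
    by rewrite lt_subE addrAC subrr add0r.
  have [U [hU hc]] := ch x hx V hV.
  exists U; split => // z w hz hw hUz hUw; left.
  have vz := hc z (sub_cl hz) hUz; have vw := hc w (sub_cl hw) hUw.
  rewrite (eh z hz) (hf z hz) in vz; rewrite (eh w hw) (hf w hw) in vw.
  rewrite (hf z hz) (hf w hw); congr Some.
  move: vz vw; set u := a0 + _; set v := a0 + _ => vz vw.
  move: vz vw; rewrite /V /= !olt_SS => /andP[z1 z2] /andP[w1 w2].
  have euv : u - v = \sum_(i in K) al i *: (fin (z i) - fin (w i)).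
    rewrite /u /v opprD addrACA subrr add0r -sumrB.
    by apply: eq_bigr => i _; rewrite scalerBr.
  have hD : zs ((u - v) *+ d).
    rewrite euv; apply: zs_lin => // i.
    have [gz _] := hK z hz; have [gw _] := hK w hw.
    apply: zsB; [move: (gz i)|move: (gw i)]; case: (_ i) => //= _; exact: zs0.
  have eqr : (q + r) - (q - r) = r + r by rewrite opprB addrC addrA subrK.
  have l1 : lt (u - v) (r + r) by rewrite -eqr; apply: lt_sub.
  have l2 : lt (v - u) (r + r) by rewrite -eqr; apply: lt_sub.
  have D0 : (u - v) *+ d = 0.
    apply: (zs_near hD (zs0 G)).
      by rewrite subr0 -r2; apply: lt_muln.
    by rewrite sub0r -mulNrn opprB -r2; apply: lt_muln.
  apply/eqP; rewrite -subr_eq0; apply/eqP; apply: (muln_inj (G:=G) d0); by rewrite D0 mul0rn.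
pose V := (Some e, None) : Omega Q * option (Omega Q).
have hV : inB V (h x) by rewrite e1.
have [U [hU hc]] := ch x hx V hV.
exists U; split => // z w hz hw hUz hUw; right.
by rewrite -(eh z hz) -(eh w hw); split; [exact: hc z (sub_cl hz) hUz|exact: hc w (sub_cl hw) hUw].
Qed.

End LC.

Set Implicit Arguments. Unset Strict Implicit. Unset Printing Implicit Defensive.
Import GRing.Theory.
Local Open Scope ring_scope.

Section Core.
Context {Q : lmodType rat} {G : zgroup Q}.
Local Notation le := (zle G).
Local Notation lt := (@zlt _ G).
Local Notation zs := (zs G).
Local Notation one := (Defs.one G).
Local Notation ole := (ole G).
Local Notation olt := (olt G).
Local Notation inB := (inB G).
Local Notation cl := (oclosure G).
Local Notation stdBox := (@stdBox _ G).
Local Notation stdB := (@stdB _ G).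
Local Notation zdiff := (@zdiff _ G).

Definition socI m (I : {set 'I_m.+1}) : {set 'I_m} := [set i | widen_ord (leqnSn m) i \in I].

Lemma inF_soc m (I : {set 'I_m.+1}) a : inF G I a -> inF G (socI I) (soc a).
Proof. by case=> hg hI; split => [i|i]; [exact: hg|rewrite inE; exact: hI]. Qed.

Lemma inF_ext m (I : {set 'I_m.+1}) a z :
  inF G I a -> a ord_max <> None -> zs z -> inF G I (ext (soc a) (Some z)).
Proof.
case=> hg hI hm hz; split => i; case: (ordS_case i) => [[i' ->]|->].
- rewrite ext_w; exact: hg.
- by rewrite ext_max.
- rewrite ext_w; exact: hI.
- rewrite ext_max; split => // _; exact/hI.
Qed.

Lemma pin_eq m (K : {set 'I_m}) x y : inF G K x -> inF G K y -> inBox G (stdBox x) y -> y = x.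
Proof.
move=> [hg hI] [hgy hIy] hU.
apply: functional_extensionality => i.
case e: (x i) => [q|].
  have hq : zs q by move: (hg i); rewrite e.
  have := hU i; rewrite /Submission.stdBox e => hUi; exact: stdB_pin hq hUi (hgy i).
case e2: (y i) => [p|] //.
have : i \in K by apply/hIy; rewrite e2.
by move/hI; rewrite e.
Qed.

Lemma socset_eq m (A : ('I_m.+1 -> Omega Q) -> Prop) b :
  soc_set A b -> exists a, A a /\ soc a = b.
Proof. case=> a [ha e]; exists a; split => //; exact: functional_extensionality. Qed.

Lemma box_split m (U : 'I_m.+1 -> Omega Q * option (Omega Q)) y :
  inBox G (soc U) (soc y) -> inB (U ord_max) (y ord_max) -> inBox G U y.
Proof. by move=> h1 h2 i; case: (ordS_case i) => [[i' ->]|->] //; exact: h1. Qed.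

Lemma ext_inBox m (U' : 'I_m -> _) V x :
  inBox G U' (soc x) -> inB V (x ord_max) -> inBox G (ext U' V) x.
Proof.
move=> h1 h2 i; case: (ordS_case i) => [[i' ->]|->]; first by rewrite ext_w; exact: h1.
by rewrite ext_max.
Qed.

Lemma inB_None (U : Omega Q * option (Omega Q)) : inB U None -> exists l, U = (Some l, None).
Proof.
case: U => lo [h|] h1.
  by move: h1; rewrite /Defs.inB => /andP[_]; rewrite olt_Nx.
case: lo h1 => [l|] h1; first by exists l.
by move: h1; rewrite /Defs.inB olt_Nx.
Qed.

Lemma affine_none k (Y : ('I_k -> Omega Q) -> Prop) g y0 :
  affine_on G Y g -> Y y0 -> g y0 = None -> forall y, Y y -> g y = None.
Proof.
case=> K [_ [h|[a0 [al h]]]] hy0 e; first exact: h.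
by rewrite h in e.
Qed.

End Core.

Set Implicit Arguments. Unset Strict Implicit. Unset Printing Implicit Defensive.
Import GRing.Theory.
Local Open Scope ring_scope.

Section Core2.
Context {Q : lmodType rat} {G : zgroup Q}.
Local Notation le := (zle G).
Local Notation lt := (@zlt _ G).
Local Notation zs := (zs G).
Local Notation one := (Defs.one G).
Local Notation ole := (ole G).
Local Notation olt := (olt G).
Local Notation inB := (inB G).
Local Notation cl := (oclosure G).
Local Notation stdBox := (@stdBox _ G).
Local Notation stdB := (@stdB _ G).
Local Notation zdiff := (@zdiff _ G).
Local Notation boxmeet := (@boxmeet _ G).

Lemma Core m (N : 'I_m -> nat) A (I : {set 'I_m}) (j : 'I_m) c M :
  precell G N A -> (forall a, A a -> inF G I a) ->
  (N j %| M)%N -> (c < M)%N -> (exists a0, A a0 /\ congr G (a0 j) c (N j)) -> j \in I ->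
  forall x, cl A x -> j \notin patt x ->
  (forall i : 'I_m, (i < j)%N -> i \in I -> i \in patt x) ->
  (forall U, inBox G U x -> exists y, A y /\ inBox G U y /\ congr G (y j) c M) /\
  (forall a, A a -> exists a', A a' /\ (forall i : 'I_m, (i < j)%N -> a' i = a i) /\
     congr G (a' j) c M).
Proof.
elim: m N A I j c M => [|m ih] N A I j c M; first by move=> _ _; case: j.
case=> I' [hI' [hsoc [mu [nu [rho [amu [lmu [nmu [anu [lnu [nnu [hrho hiff]]]]]]]]]]]].
move=> hI.
have hIs : forall b, soc_set A b -> inF G (socI I) b.
  by move=> b /socset_eq [a [ha <-]]; apply: inF_soc; apply: hI.
case: (ordS_case j) => [[j' ->]|->] dvd cM [a0 [ha0 ca0]] jI x hx jx hbelow.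
  set w := widen_ord (leqnSn m).
  have hxs := cl_soc hx.
  have [hxg hxI] := cl_gamma hI hx.
  have jx' : j' \notin patt (soc x) by move: jx; rewrite !inE.
  have hb' : forall i : 'I_m, (i < j')%N -> i \in socI I -> i \in patt (soc x).
    move=> i hi hiI; have := hbelow (w i) hi.
    by rewrite !inE; apply; move: hiI; rewrite inE.
  have a0' : exists a0, soc_set A a0 /\ congr G (a0 j') c (soc N j').
    by exists (soc a0); split => //; exists a0.
  have jI' : j' \in socI I by rewrite inE.
  have [C1 C2] := ih (soc N) (soc_set A) (socI I) j' c M hsoc hIs dvd cM a0' jI' (soc x) hxs jx' hb'.
  split; last first.
    move=> a ha.
    have [b' [hbb' [hag cb']]] := C2 (soc a) (ex_intro _ a (conj ha (fun _ => erefl))).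
    have [a'' [ha'' sa'']] := socset_eq hbb'.
    exists a''; split => //; split; last by rewrite -sa'' in cb'.
    move=> i hi; have [i' ei] := widen_lt (ltn_trans hi (ltn_ord j')).
    rewrite ei; have := hag i'; rewrite -sa'' /soc => -> //.
    by move: hi; rewrite ei.
  move=> U hU.
  case mI: (ord_max \in I); last first.
    have xm : x ord_max = None.
      by case e: (x ord_max) => [q|] //; have := hxI ord_max; rewrite e mI => /(_ (fun e => ltac:(discriminate))).
    have [yh [hyh [hUyh cyh]]] := C1 (soc U) (fun i => hU (w i)).
    have [a'' [ha'' sa'']] := socset_eq hyh.
    exists a''; split => //; split; last by rewrite -sa'' in cyh.
    apply: box_split; first by rewrite sa''.
    have := hU ord_max; rewrite xm.
    case e: (a'' ord_max) => [p|] // _.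
    by have := proj2 (proj2 (hI a'' ha'') ord_max); rewrite e mI => /(_ (fun e => ltac:(discriminate))).
  have hAm : forall a, A a -> exists p, a ord_max = Some p /\ zs p.
    move=> a ha; have [hg hi] := hI a ha; case e: (a ord_max) => [p|].
      by exists p; split => //; move: (hg ord_max); rewrite e.
    by have := proj1 (hi ord_max) mI; rewrite e.
  case xmE: (x ord_max) => [e|].
    have he : zs e by move: (hxg ord_max); rewrite xmE.
    have [U3 [hU3 hc3]] := loc_const e amu lmu hxs.
    have [U4 [hU4 hc4]] := loc_const e anu lnu hxs.
    have hB : inBox G (ext (boxmeet U3 U4) (stdB (Some e))) x.
      apply: ext_inBox; first by apply/inBox_meet.
      by rewrite xmE; exact: stdB_in.
    have [a [ha hUa]] := hx _ hB.
    have am : a ord_max = Some e.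
      have := hUa ord_max; rewrite ext_max => h.
      exact: stdB_pin he h (proj1 (hI a ha) ord_max).
    have sU34 : inBox G (boxmeet U3 U4) (soc a).
      by move=> i; have := hUa (w i); rewrite ext_w.
    move/inBox_meet: sU34 => [sU3 sU4].
    have hB2 : inBox G (boxmeet (soc U) (boxmeet U3 U4)) (soc x).
      apply/inBox_meet; split; first by move=> i; exact: hU.
      by apply/inBox_meet.
    have [yh [hyh [hUyh cyh]]] := C1 _ hB2.
    move/inBox_meet: hUyh => [hUyh1 /inBox_meet [hUyh3 hUyh4]].
    have [a'' [ha'' sa'']] := socset_eq hyh.
    have hsa : soc_set A (soc a) by exists a.
    have [_ [_ [ma [na ca]]]] := proj1 (hiff a) ha.
    rewrite am in ma na ca.
    have mu_ok : ole (mu yh) (Some e).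
      case: (hc3 yh (soc a) hyh hsa hUyh3 sU3) => [-> //|[_ h]].
      by move: h; rewrite olt_def ma.
    have nu_ok : ole (Some e) (nu yh).
      case: (hc4 yh (soc a) hyh hsa hUyh4 sU4) => [-> //|[h _]]; exact: oltW h.
    have [p'' [ep'' _]] := hAm a'' ha''.
    exists (ext yh (Some e)); split.
      apply/hiff; rewrite soc_ext ext_max; split.
        rewrite -sa''; apply: inF_ext; [exact: hI' a'' ha''|by rewrite ep''|exact: he].
      by do 3! (split => //).
    split; last by rewrite /w ext_w.
    apply: box_split; first by rewrite soc_ext.
    by rewrite ext_max -xmE; apply: hU.
  have xm := xmE.
  case: lnu => [h [eh ch]].
  have hN : h (soc x) = None.
    case e1: (h (soc x)) => [q|] //.
    have hV : inB (stdB (Some q)) (h (soc x)) by rewrite e1; exact: stdB_in.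
    have [U1 [hU1 hc1]] := ch _ hxs _ hV.
    have hB : inBox G (ext U1 (Some (q + one), None)) x by apply: ext_inBox => //; rewrite xm.
    have [y [hy hUy]] := hx _ hB.
    have sy : soc_set A (soc y) by exists y.
    have hUs : inBox G U1 (soc y) by move=> i; have := hUy (w i); rewrite ext_w.
    have := hc1 _ (sub_cl sy) hUs; rewrite eh //.
    have [_ [_ [_ [nuy _]]]] := proj1 (hiff y) hy.
    have := hUy ord_max; rewrite ext_max.
    have [s [es _]] := hAm y hy; rewrite es in nuy *.
    move=> /= l1; rewrite olt_SS in l1.
    case: (nu (soc y)) nuy => [r|] nuy /=.
      move=> /andP[_]; rewrite olt_SS => l2.
      rewrite /= in nuy.
      have := lt_trans (lt_le_trans l1 nuy) l2.
      by rewrite /zlt eqxx andbF.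
    by rewrite olt_Nx.
  have [l eU] : exists l, U ord_max = (Some l, None).
    by have := hU ord_max; rewrite xm => /inB_None.
  pose V2 := (Some (l + one *+ N ord_max), None) : Omega Q * option (Omega Q).
  have hV2 : inB V2 (h (soc x)) by rewrite hN.
  have [U2 [hU2 hc2]] := ch _ hxs V2 hV2.
  have hB2 : inBox G (boxmeet (soc U) U2) (soc x).
    by apply/inBox_meet; split => // i; exact: hU.
  have [yh [hyh [hUyh cyh]]] := C1 _ hB2.
  move/inBox_meet: hUyh => [hUyh1 hUyh2].
  have [a'' [ha'' sa'']] := socset_eq hyh.
  have nuyh : olt (Some (l + one *+ N ord_max)) (nu yh).
    by rewrite -(eh _ hyh); exact: hc2 _ (sub_cl hyh) hUyh2.
  have [p [ep hp]] := hAm a'' ha''.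
  have [_ [_ [ma _]]] := proj1 (hiff a'') ha''.
  rewrite sa'' ep in ma.
  case: (boolP (lt l p)) => lp.
    exists a''; split => //; split; last by rewrite -sa'' in cyh.
    apply: box_split; first by rewrite sa''.
    by rewrite eU ep; change (olt (Some l) (Some p)); rewrite olt_SS lp.
  have lpl : le p l by rewrite leNgt.
  have [z [hz [lz [zl cz]]]] := ceil_class (G:=G) l hrho.
  exists (ext yh (Some z)); split.
    apply/hiff; rewrite soc_ext ext_max; split.
      rewrite -sa''; apply: inF_ext; [exact: hI' a'' ha''|by rewrite ep|exact: hz].
    split => //; split.
      apply: ole_trans ma _; change (le p z); apply: le_trans lpl _; exact: ltW.
    split => //; apply: oltW; apply: ole_lt_trans nuyh; exact: zl.
  split; last by rewrite /w ext_w.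
  apply: box_split; first by rewrite soc_ext.
  by rewrite ext_max eU; change (olt (Some l) (Some z)); rewrite olt_SS.
have xm : x ord_max = None by move: jx; rewrite inE negbK => /eqP.
have [hxg hxI] := cl_gamma hI hx.
have hxs : soc_set A (soc x).
  apply: (cl_discrete (I := socI I) hIs); last exact: cl_soc hx.
  split; first by move=> i; apply: hxg.
  move=> i; rewrite inE; split.
    move=> h; have := hbelow (widen_ord (leqnSn m) i) (ltn_ord i) h.
    by rewrite inE => /eqP.
  exact: hxI.
have nux : nu (soc x) = None.
  case e: (nu (soc x)) => [q|] //.
  have hU : inBox G (ext (stdBox (soc x)) (Some q, None)) x.
    by apply: ext_inBox; [exact: stdBox_in|rewrite xm].
  have [y [hy hUy]] := hx _ hU.
  have sy : soc y = soc x.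
    apply: (pin_eq (K := socI I)); [apply: hIs => //|apply: inF_soc; exact: hI|].
    by move=> i; have := hUy (widen_ord (leqnSn m) i); rewrite ext_w.
  have [_ [_ [_ [h4 _]]]] := proj1 (hiff y) hy.
  move: h4; rewrite sy e; have := hUy ord_max; rewrite ext_max /= => h5 h4.
  by move: h5; rewrite olt_def h4.
have nuN : forall b, soc_set A b -> nu b = None by apply: affine_none anu hxs nux.
have hAm : forall a, A a -> exists p, a ord_max = Some p /\ zs p.
  move=> a ha; have [hg hi] := hI a ha; case e: (a ord_max) => [p|].
    by exists p; split => //; move: (hg ord_max); rewrite e.
  by have := proj1 (hi ord_max) jI; rewrite e.
have [p0 [e0 _]] := hAm a0 ha0.
have [_ [_ [_ [_ cr0]]]] := proj1 (hiff a0) ha0.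
rewrite e0 in ca0 cr0.
case/dvdnP: dvd => k ek.
have mk : forall a z, A a -> zs z -> (exists p, a ord_max = Some p /\ le p z) ->
    zdiff z (one *+ c) M -> A (ext (soc a) (Some z)).
  move=> a z ha hz [p [ep lpz]] cz; apply/hiff.
  rewrite soc_ext ext_max; split.
    by apply: inF_ext; [exact: hI' a ha|rewrite ep|exact: hz].
  split; first by exists a.
  have [_ [_ [h3 _]]] := proj1 (hiff a) ha.
  split; first by apply: ole_trans h3 _; rewrite ep /=.
  split; first by rewrite nuN //; exists a.
  rewrite /=; apply: (@zdiff_trans _ G p0) => //.
  apply: (@zdiff_trans _ G (one *+ c)); last exact: zdiff_sym.
  by move: cz; rewrite ek mulnC => /zdiff_dvd.
split.
  move=> U hU.
  have := hU ord_max; rewrite xm => /inB_None [l eU].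
  have [a [ha sa]] := socset_eq hxs.
  have [p [ep hp]] := hAm a ha.
  pose q := if le p l then l else p.
  have [z [hz [lz [_ cz]]]] := ceil_class (G:=G) q cM.
  exists (ext (soc a) (Some z)); split.
    apply: mk => //; exists p; split => //; apply: ltW; apply: le_lt_trans lz.
    by rewrite /q; case: ifP => // _; apply: le_refl.
  split; last by rewrite ext_max.
  apply: box_split; first by rewrite soc_ext sa => i; apply: hU.
  rewrite ext_max eU; change (olt (Some l) (Some z)); rewrite olt_SS; apply: le_lt_trans lz.
  rewrite /q; case: ifP => h; first by apply: le_refl.
  by case/orP: (le_total (G:=G) l p) => // h'; rewrite h' in h.
move=> a ha; have [p [ep hp]] := hAm a ha.
have [z [hz [lz [_ cz]]]] := ceil_class (G:=G) p cM.
exists (ext (soc a) (Some z)); split.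
  apply: mk => //; exists p; split => //; exact: ltW.
split; last by rewrite ext_max.
move=> i hi; have [i' ->] := widen_lt hi; by rewrite ext_w.
Qed.

End Core2.

Set Implicit Arguments. Unset Strict Implicit. Unset Printing Implicit Defensive.
Import GRing.Theory.
Local Open Scope ring_scope.


Unset Implicit Arguments.
Theorem proposition5p5 (Q : lmodType rat) (G : zgroup Q) (m : nat)
    (N : 'I_m -> nat) (I : {set 'I_m}) (A : ('I_m -> Omega Q) -> Prop) :
  (forall i, 0 < N i)%N ->
  (forall a, A a -> inF G I a) ->
  precell G N A ->
  monohedral G A ->
  ~ oclosed G A ->
  forall n : nat, (1 <= n)%N ->
  exists N' : 'I_m -> nat, (forall i, 0 < N' i)%N /\
    exists P : 'I_n -> ('I_m -> Omega Q) -> Prop,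
      (forall i, exists a, P i a) /\
      (forall i j a, P i a -> P j a -> i = j) /\
      (forall a, A a <-> exists i, P i a) /\
      (forall i, precell G N' (P i)) /\
      (forall i x, ofrontier G (P i) x <-> ofrontier G A x).
Proof.
move=> hN hI hpre hmono hnc n hn.
have [x0 [hx0 nx0]] : exists x0, oclosure G A x0 /\ ~ A x0.
  apply: NNPP => hne; apply: hnc => x; split; last exact: sub_cl.
  by move=> hx; apply: NNPP => nx; apply: hne; exists x.
have [a0 [ha0 _]] := hx0 _ (stdBox_in (G:=G) x0).
pose PF (K : {set 'I_m}) := K != I /\ exists a, face G K A a.
pose pb K := if excluded_middle_informative (PF K) then true else false.
have pbP : forall K, pb K <-> PF K.
  by move=> K; rewrite /pb; case: excluded_middle_informative.
have discA : forall B, (forall a, B a -> A a) -> forall y, A y -> oclosure G B y -> B y.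
  move=> B hB y hy hy'; apply: (cl_discrete (I := I) _ (hI y hy) hy').
  by move=> a /hB; apply: hI.
have faceP : forall y, oclosure G A y -> ~ A y -> PF (patt y).
  move=> y hy ny; have [h1 h2] := cl_inF hI hy; split; last by exists y.
  apply/negP => /eqP e; apply: ny; rewrite e in h1; exact: cl_discrete hI h1 hy.
have pK1 : pb (patt x0) by apply/pbP; exact: faceP.
case: (arg_maxnP (fun K : {set 'I_m} => #|K|) pK1) => K0 /pbP [K0I [x1 [hx1 fx1]]] Kmax.
have [px1 sK0] := cl_inF hI hx1.
have eK0 : patt x1 = K0.
  apply/setP => i; rewrite inE; apply/idP/idP; first by move/eqP/(proj2 fx1 i).
  by move/(proj2 fx1 i)/eqP.
have K0sub : K0 \subset I by rewrite -eK0.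
have [i0 i0D] : exists i0, i0 \in I :\: K0.
  apply/set0Pn; rewrite setD_eq0; apply/negP => h; apply: (negP K0I).
  by rewrite eqEsubset K0sub h.
case: (arg_minnP (fun i : 'I_m => val i) i0D) => j jD jmin.
move/setDP: jD => [jI jK0].
have hbelow : forall (z : 'I_m -> Omega Q), inF G K0 z ->
    forall i : 'I_m, (i < j)%N -> i \in I -> i \in patt z.
  move=> z fz i hi iI; rewrite inE; apply/eqP; apply/(proj2 fz i).
  apply/negPn/negP => iK; have : (j <= i)%N by apply: jmin; apply/setDP.
  by rewrite leqNgt hi.
have jpatt : forall (z : 'I_m -> Omega Q), inF G K0 z -> j \notin patt z.
  move=> z fz; rewrite inE negbK; apply/eqP.
  by case e: (z j) => [q|] //; exfalso; move/negP: jK0; apply; apply/(proj2 fz j); rewrite e.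
have [p0 [ep0 hp0]] : exists p0, a0 j = Some p0 /\ zs G p0.
  have [hg hi] := hI a0 ha0; case e: (a0 j) => [p|].
    by exists p; split => //; move: (hg j); rewrite e.
  by have := proj1 (hi j) jI; rewrite e.
have [r0 [r0N cr0]] := std_rep (hN j) hp0.
pose M := (n * N j)%N.
have M0 : (0 < M)%N by rewrite /M muln_gt0 hn hN.
pose c (k : 'I_n) := (r0 + k * N j)%N.
have cM : forall k : 'I_n, (c k < M)%N.
  move=> k; rewrite /c /M; have := ltn_ord k; nia.
have dvdM : (N j %| M)%N by rewrite /M dvdn_mull.
have ca0 : forall k : 'I_n, congr G (a0 j) (c k) (N j).
  move=> k; rewrite ep0; apply: (@zdiff_trans _ G (Defs.one G *+ r0)) => //.
  exists (- (Defs.one G *+ k)); split; first by apply: zsN; apply: zs_onen.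
  by rewrite /c mulrnDr opprD addrA subrr add0r mulNrn mulrnA.
have CoreK := fun k : 'I_n => Core hpre hI dvdM (cM k) (ex_intro _ a0 (conj ha0 (ca0 k))) jI.
pose P (k : 'I_n) := restr G A j (c k) M.
exists (upd N j M); split.
  by move=> i; rewrite /upd; case: eqP.
exists P; split.
  move=> k; have [_ C2] := CoreK k x1 hx1 (jpatt _ fx1) (hbelow _ fx1).
  have [a' [ha' [_ ca']]] := C2 a0 ha0; by exists a'.
split.
  move=> k k' a [ha ca] [_ ca'].
  have [hg hi] := hI a ha; case e: (a j) ca ca' => [p|] ca ca'; last first.
    by have := proj1 (hi j) jI; rewrite e.
  have := std_distinct (cM k) (cM k') (@zdiff_trans _ G p _ _ _ (zdiff_sym ca) ca').
  rewrite /c => h; apply: val_inj => /=; have := hN j; nia.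
split.
  move=> a; split; last by case=> k [].
  move=> ha; have [hg hi] := hI a ha; case e: (a j) => [p|]; last first.
    by have := proj1 (hi j) jI; rewrite e.
  have hp := precell_class hpre ha ha0 e ep0.
  have [w [hw ew]] := @zdiff_trans _ G p0 _ _ _ hp cr0.
  have [i [iN [v [hv ev]]]] := std_rep hn hw.
  exists (Ordinal iN); split => //; rewrite e.
  exists v; split => //.
  by rewrite /c /= mulrnDr opprD addrA ew (mulrnA (Defs.one G)) -mulrnBl ev -mulrnA.
split.
  move=> k; apply: Ref => //.
  move=> a ha; have [_ C2] := CoreK k x1 hx1 (jpatt _ fx1) (hbelow _ fx1).
  exact: C2.
move=> k x.
have PA : forall a, P k a -> A a by move=> a [].
have face0 : forall z, face G K0 A z -> oclosure G (P k) z.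
  move=> z [hz fz]; have [C1 _] := CoreK k z hz (jpatt _ fz) (hbelow _ fz).
  move=> U hU; have [y [hy [hUy cy]]] := C1 U hU; by exists y.
have clAP : forall y, oclosure G A y -> ~ A y -> oclosure G (P k) y.
  move=> y hy ny; have [_ [x2 fx2]] := faceP y hy ny.
  have fy : face G (patt y) A y by split => //; exact: proj1 (cl_inF hI hy).
  case: (hmono _ _ (ex_intro _ y fy) (ex_intro _ x1 (conj hx1 fx1))) => h.
    apply: cl_idem; apply: (cl_mono face0); exact: h y fy.
  have h1 := h x1 (conj hx1 fx1).
  have [_ sub1] := cl_inF (A := face G (patt y) A) (fun a ha => proj2 ha) h1.
  have : (#|patt y| <= #|K0|)%N by apply: Kmax; apply/pbP; exact: faceP.
  rewrite eK0 in sub1 => hc.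
  have eK : patt y = K0 by apply/eqP; rewrite eq_sym eqEcard sub1 hc.
  apply: face0; split => //; by rewrite -eK; exact: proj1 (cl_inF hI hy).
rewrite /ofrontier; split.
  apply: cl_mono => y [hy ny]; split; first exact (cl_mono PA hy).
  move=> hA; apply: ny; exact: discA PA y hA hy.
move=> hx; apply: cl_idem; move: hx; apply: cl_mono => y [hy ny].
apply: sub_cl; split; first exact: clAP.
by move=> /PA.
Qed.
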